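(* Let $\mathcal{A}\in\mathbb{R}^{n_1\times\cdots\times n_d}$ ($d\ge 2$) and $p\in\{1,\dots,d\}$, and let $\mathcal{G}^{(1)},\dots,\mathcal{G}^{(d)}$ be the cores output by the sparse TT conversion procedure described below applied to $(\mathcal{A},p)$. Then $\mathbf{L}(\mathcal{G}^{(k)})$ has orthonormal columns for every $k<p$, and $\mathbf{R}(\mathcal{G}^{(k)})^T$ has orthonormal columns for every $k>p$.
   Context: TT format: cores $\mathcal{G}^{(k)}\in\mathbb{R}^{r_{k-1}\times n_k\times r_k}$, $r_0=r_d=1$, represent the tensor with entries $\mathcal{G}^{(1)}(:,i_1,:)\cdots\mathcal{G}^{(d)}(:,i_d,:)$. For a core $\mathcal{G}\in\mathbb{R}^{a\times n\times b}$: $\mathbf{L}(\mathcal{G})\in\mathbb{R}^{an\times b}$, $\mathbf{L}(\mathcal{G})_{(i-1)n+j,\,l}=\mathcal{G}(i,j,l)$; $\mathbf{R}(\mathcal{G})\in\mathbb{R}^{a\times nb}$, $\mathbf{R}(\mathcal{G})_{i,\,(j-1)b+l}=\mathcal{G}(i,j,l)$. A $p$-fiber of $\mathcal{A}$ is a vector $\mathcal{A}(i_1,\dots,i_{p-1},:,i_{p+1},\dots,i_d)\in\mathbb{R}^{n_p}$. $\operatorname{Depar}$: given $\mathbf{M}\in\mathbb{R}^{a\times b}$, process columns $j=1,\dots,b$ in order, keeping an ordered list $K$ of kept columns: if $\mathbf{M}_{:,j}=cK_i$ for some kept $K_i$ and scalar $c$ (first such $i$), set $T_{i,j}=c$; otherwise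 append $\mathbf{M}_{:,j}$ to $K$ and set $T_{|K|,j}=1$; other entries of $\mathbf{T}$ are zero. Output $\mathbf{N}=[K_1\cdots K_\beta]$, $\mathbf{T}\in\mathbb{R}^{\beta\times b}$. Sparse TT conversion procedure on $(\mathcal{A},p)$: enumerate the nonzero $p$-fibers as $j=1,\dots,R$, the $j$-th having fixed indices $(i^{(j)}_1,\dots,i^{(j)}_{p-1},i^{(j)}_{p+1},\dots,i^{(j)}_d)$ and value $\mathbf{v}_j\in\mathbb{R}^{n_p}$. Initialize a TT with ranks $r_0=r_d=1$, $r_k=R$ otherwise: for $k\neq p$, $\mathcal{G}^{(k)}(a,i,b)=1$ if $i=i^{(j)}_k$, where $j=b$ if $k=1$, $j=a$ if $k=d$, and $a=b=j$ is required if $1<k<d$; all other entries $0$. For $k=p$, $\mathcal{G}^{(p)}(a,i,b)=\mathbf{v}_j(i)$ with $j$ determined by the same rule, other entries $0$. Then set $\tilde r_0=1$; for $k=1,\dots,p-1$: $(\mathbf{N},\mathbf{T})=\operatorname{Depar}(\mathbf{L}(\mathcal{G}^{(k)}))$, $\mathbf{N}\in\mathbb{R}^{\tilde r_{k-1}n_k\times\tilde r_k}$; replace $\mathcal{G}^{(k)}$ by the core whose $\mathbf{L}$-unfolding is $\mathbf{N}$; replace each slice $\mathcal{G}^{(k+1)}(:,i,:)$ by $\mathbf{T}\mathcal{G}^{(k+1)}(:,i,:)$. Then set $\tilde r_d=1$; for $k=d,\dots,p+1$: $(\mathbf{N},\mathbf{T})=\operatorname{Depar}(\mathbf{R}(\mathcal{G}^{(k)})^T)$,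 $\mathbf{N}\in\mathbb{R}^{n_k\tilde r_k\times\tilde r_{k-1}}$; replace $\mathcal{G}^{(k)}$ by the core whose $\mathbf{R}$-unfolding is $\mathbf{N}^T$; replace each slice $\mathcal{G}^{(k-1)}(:,i,:)$ by $\mathcal{G}^{(k-1)}(:,i,:)\mathbf{T}^T$. Output the resulting cores. *)

(* Defs.v *)
(* Sparse-TT conversion procedure (Depar-based) of the paper,
   formalized with 0-based indices throughout. *)
From mathcomp Require Import all_boot all_order all_algebra.
From mathcomp Require Import reals.
Set Implicit Arguments. Unset Strict Implicit. Unset Printing Implicit Defensive.
Import Order.TTheory GRing.Theory Num.Theory.
Local Open Scope ring_scope.

Section SparseTT.
Variable R : realType.

Definition orthonormal_cols (m c : nat) (M : nat -> nat -> R) : Prop :=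
  forall j1 j2, (j1 < c)%N -> (j2 < c)%N ->
    \sum_(r < m) M r j1 * M r j2 = (j1 == j2)%:R.

(* A matrix is handled as the list of its columns (each a [seq R]). *)
Definition scalev (c : R) (w : seq R) : seq R := map ( *%R c) w.

(* candidate scalar c with v = c w : determined by the first nonzero entry
   of w; if w = 0 every c works and we take c = 1. *)
Definition coef (w v : seq R) : R :=
  let r0 := find (fun x => x != 0) w in
  if (r0 < size w)%N then nth 0 v r0 / nth 0 w r0 else 1.

Definition is_mult (w v : seq R) : bool := v == scalev (coef w v) w.

(* Returns the final kept list and, for each processed column j, the pair
   (i, T_{i,j}) describing the unique nonzero entry of column j of T. *)
Fixpoint depar_rec (K : seq (seq R)) (cols : seq (seq R))
  : seq (seq R) * seq (nat * R) :=
  match cols with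
  | [::] => (K, [::])
  | v :: cs =>
      let i := find (fun w => is_mult w v) K in
      if (i < size K)%N then
        let KT := depar_rec K cs in
        (KT.1, (i, coef (nth [::] K i) v) :: KT.2)
      else
        let KT := depar_rec (rcons K v) cs in
        (KT.1, (size K, 1) :: KT.2)
  end.

(* Depar(M) = (N, T) : N given by its list of columns K_1..K_beta,
   T given column-wise as above. *)
Definition depar (cols : seq (seq R)) := depar_rec [::] cols.

Definition Tent (T : seq (nat * R)) (a j : nat) : R :=
  let e := nth (0%N, 0) T j in if e.1 == a then e.2 else 0.

(* core G in R^{r1 x n x r2}, entry G(a,i,b) = cf a i b (0-based) *)
Record core := Core { cr1 : nat; cn : nat; cr2 : nat; cf : nat -> nat -> nat -> R }.
Definition core0 : core := Core 0 0 0 (fun _ _ _ => 0).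

(* L(G) in R^{(r1 n) x r2}: L(G)_{i*n+j, l} = G(i,j,l) *)
Definition Lunf (G : core) (r l : nat) : R := cf G (r %/ cn G) (r %% cn G) l.
Definition Lrows (G : core) : nat := (cr1 G * cn G)%N.
(* R(G)^T in R^{(n r2) x r1}: (R(G)^T)_{j*r2+l, i} = G(i,j,l) *)
Definition Rtunf (G : core) (r i : nat) : R := cf G i (r %/ cr2 G) (r %% cr2 G).
Definition Rtrows (G : core) : nat := (cn G * cr2 G)%N.

Definition Lcols (G : core) : seq (seq R) :=
  [seq [seq Lunf G r l | r <- iota 0 (Lrows G)] | l <- iota 0 (cr2 G)].
Definition Rtcols (G : core) : seq (seq R) :=
  [seq [seq Rtunf G r i | r <- iota 0 (Rtrows G)] | i <- iota 0 (cr1 G)].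

(* dims n = [:: n_0; ...; n_(d-1)], d = size n; a tensor is a function on
   multi-indices (only valid multi-indices matter). *)
(* fixed indices of a p-fiber: a multi-index whose p-th entry is set to 0 *)
Definition valid_fixed (n : seq nat) (p : nat) (s : seq nat) : Prop :=
  size s = size n /\ nth 0%N s p = 0%N /\
  forall k, (k < size n)%N -> k != p -> (nth 0%N s k < nth 0%N n k)%N.

Definition fiber (A : seq nat -> R) (p : nat) (s : seq nat) (i : nat) : R :=
  A (set_nth 0%N s p i).

Definition fiber_nonzero (n : seq nat) (A : seq nat -> R) (p : nat)
  (s : seq nat) : Prop :=
  exists2 i, (i < nth 0%N n p)%N & fiber A p s i != 0.

Definition fiber_enum (n : seq nat) (A : seq nat -> R) (p : nat)
  (fibs : seq (seq nat)) : Prop :=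
  uniq fibs /\
  forall s, s \in fibs <-> (valid_fixed n p s /\ fiber_nonzero n A p s).

Definition init_core (n : seq nat) (A : seq nat -> R) (p : nat)
  (fibs : seq (seq nat)) (k : nat) : core :=
  let d := size n in
  let Rk := size fibs in
  let a := if k == 0%N then 1%N else Rk in
  let b := if k == d.-1 then 1%N else Rk in
  Core a (nth 0%N n k) b (fun x i y =>
    (* the fiber index j determined by (x, y), if any *)
    let oj := if k == 0%N then Some y
              else if k == d.-1 then Some x
              else if x == y then Some x else None in
    match oj with
    | None => 0
    | Some j =>
        let s := nth [::] fibs j in
        if k == p then fiber A p s i
        else if i == nth 0%N s k then 1 else 0
    end).

Definition init_tt n A p fibs : seq core :=
  [seq init_core n A p fibs k | k <- iota 0 (size n)].

Definition fwd_step (G : seq core) (k : nat) : seq core :=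
  let Gk := nth core0 G k in
  let NT := depar (Lcols Gk) in
  let N := NT.1 in let T := NT.2 in
  let beta := size N in
  let Gk' := Core (cr1 Gk) (cn Gk) beta
               (fun i j l => nth 0 (nth [::] N l) (i * cn Gk + j)%N) in
  let Gk1 := nth core0 G k.+1 in
  let Gk1' := Core beta (cn Gk1) (cr2 Gk1)
               (fun a i b => \sum_(a0 < cr2 Gk) Tent T a a0 * cf Gk1 a0 i b) in
  set_nth core0 (set_nth core0 G k Gk') k.+1 Gk1'.

Definition bwd_step (G : seq core) (k : nat) : seq core :=
  let Gk := nth core0 G k in
  let NT := depar (Rtcols Gk) in
  let N := NT.1 in let T := NT.2 in
  let beta := size N in
  let Gk' := Core beta (cn Gk) (cr2 Gk)
               (fun i j l => nth 0 (nth [::] N i) (j * cr2 Gk + l)%N) in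
  let Gkm := nth core0 G k.-1 in
  let Gkm' := Core (cr1 Gkm) (cn Gkm) beta
               (fun a i b' => \sum_(b < cr1 Gk) cf Gkm a i b * Tent T b' b) in
  set_nth core0 (set_nth core0 G k Gk') k.-1 Gkm'.

Definition sparse_tt (n : seq nat) (A : seq nat -> R) (p : nat)
  (fibs : seq (seq nat)) : seq core :=
  let d := size n in
  let G1 := foldl fwd_step (init_tt n A p fibs) (iota 0 p) in
  foldl bwd_step G1 (rev (iota p.+1 (d.-1 - p))).

End SparseTT.

(* Main.v *)
Require Import Defs.
From mathcomp Require Import all_boot all_order all_algebra.
From mathcomp Require Import reals.
Import Order.TTheory GRing.Theory Num.Theory.
Local Open Scope ring_scope.

Section S.
Variable R : realType.

Definition uv (m u : nat) : seq R := [seq (r == u)%:R | r <- iota 0 m].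

Lemma size_uv m u : size (uv m u) = m.
Proof. by rewrite size_map size_iota. Qed.

Lemma nth_uv m u r : (r < m)%N -> nth 0 (uv m u) r = (r == u)%:R.
Proof. by move=> h; rewrite (nth_map 0%N) ?size_iota // nth_iota. Qed.

Lemma uv_inj m u v : (u < m)%N -> (v < m)%N -> uv m u = uv m v -> u = v.
Proof.
move=> hu hv e; move: (congr1 (fun s => nth 0 s u) e) => /=.
rewrite !nth_uv // eqxx; case: eqP => // _ /eqP; by rewrite oner_eq0.
Qed.

Lemma uv_dot m u1 u2 : (u1 < m)%N ->
  \sum_(r < m) nth 0 (uv m u1) r * nth 0 (uv m u2) r = (u1 == u2)%:R.
Proof.
move=> h; rewrite (bigD1 (Ordinal h)) //= big1 ?addr0.
  by rewrite !nth_uv // eqxx mul1r.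
move=> [i hi] /= hne; rewrite nth_uv //.
have -> : (i == u1) = false.
  by apply/negbTE; apply: contra hne => /eqP e; apply/eqP/val_inj.
by rewrite mul0r.
Qed.

Lemma find_nz m u : (u < m)%N -> find (fun x => x != 0) (uv m u) = u.
Proof.
move=> h.
have hh : has (fun x => x != 0) (uv m u).
  by apply/hasP; exists (nth 0 (uv m u) u); [apply: mem_nth; rewrite size_uv|rewrite nth_uv // eqxx oner_eq0].
have := nth_find 0 hh; have := hh; rewrite has_find size_uv => hf.
rewrite nth_uv //; case: (@eqP _ (find _ _) u) => // _ /=; by rewrite eqxx.
Qed.

Lemma coef_uv m u v : (u < m)%N -> coef (uv m u) v = nth 0 v u.
Proof. by move=> h; rewrite /coef find_nz // size_uv h nth_uv // eqxx divr1. Qed.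

Lemma is_mult_uv m u v : (u < m)%N -> (v < m)%N -> is_mult (uv m u) (uv m v) = (u == v).
Proof.
move=> hu hv; rewrite /is_mult coef_uv // nth_uv //.
case: (eqVneq u v) => [->|ne].
  by rewrite /scalev; apply/eqP; rewrite -[LHS]map_id; apply: eq_map => x /=; rewrite mul1r.
apply/negP => /eqP e; move: (congr1 (fun s => nth 0 s v) e) => /=.
rewrite nth_uv // eqxx /scalev (nth_map 0) ?size_uv // mul0r.
by move/eqP; rewrite oner_eq0.
Qed.

Lemma divmod_eq r q c s : (s < q)%N -> ((r == c * q + s) = ((r %/ q == c) && (r %% q == s)))%N.
Proof.
move=> hs; have hq : (0 < q)%N by apply: leq_ltn_trans hs.
apply/eqP/andP => [->|[/eqP e1 /eqP e2]].
  by rewrite divnMDl // modnMDl divn_small // addn0 modn_small.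
by rewrite {1}(divn_eq r q) e1 e2.
Qed.

Lemma depar_rec_uv m (us : seq nat) : forall (K : seq (seq R)),
  (forall w, w \in K -> exists2 u, (u < m)%N & w = uv m u) -> uniq K ->
  all (fun u => u < m)%N us ->
  let KT := depar_rec K [seq uv m u | u <- us] in
  [/\ (forall w, w \in KT.1 -> exists2 u, (u < m)%N & w = uv m u), uniq KT.1,
      exists K', KT.1 = K ++ K',
      size KT.2 = size us &
      forall j, (j < size us)%N ->
        [/\ (nth (0%N,0%R) KT.2 j).2 = 1, ((nth (0%N,0%R) KT.2 j).1 < size KT.1)%N%N &
            nth [::] KT.1 (nth (0%N,0%R) KT.2 j).1 = uv m (nth 0%N us j)]].
Proof.
elim: us => [|u us IH] K hK hKu.
  by move=> _ /=; split => //; exists [::]; rewrite cats0.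
rewrite /= => /andP[hu hus].
have hfind : find (fun w => is_mult w (uv m u)) K = index (uv m u) K.
  rewrite /index; apply: eq_in_find => w /hK [u' hu' ->] /=.
  rewrite is_mult_uv //; apply/eqP/eqP => [->//|]; exact: uv_inj.
rewrite hfind index_mem; case: ifP => hv.
  have [H1 H2 [K' e] H3 H4] := IH K hK hKu hus.
  split => //=; first by exists K'.
  - by rewrite H3.
  case=> [|j] /=; last exact: H4.
  move=> _; rewrite nth_index // coef_uv // nth_uv // eqxx; split => //.
    by rewrite e size_cat; apply: leq_trans (leq_addr _ _); rewrite index_mem.
  by rewrite e nth_cat index_mem hv nth_index.
have hK' : forall w, w \in rcons K (uv m u) -> exists2 u0, (u0 < m)%N & w = uv m u0.
  move=> w; rewrite mem_rcons in_cons => /orP[/eqP ->|/hK //]; by exists u.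
have hKu' : uniq (rcons K (uv m u)) by rewrite rcons_uniq hv hKu.
have [H1 H2 [K' e] H3 H4] := IH _ hK' hKu' hus.
split => //=.
- by exists (uv m u :: K'); rewrite e cat_rcons.
- by rewrite H3.
case=> [|j] /=; last exact: H4.
move=> _; split => //.
  by rewrite e size_cat size_rcons; apply: leq_trans (leq_addr _ _).
by rewrite e nth_cat size_rcons ltnSn nth_rcons ltnn eqxx.
Qed.
End S.

Lemma lt_pos c q s r : (c < r)%N -> (s < q)%N -> (c * q + s < r * q)%N.
Proof.
move=> hc hs; apply: (@leq_trans (c.+1 * q)%N).
  by rewrite mulSn [X in (_ < X)%N]addnC ltn_add2l.
by rewrite leq_mul2r hc orbT.
Qed.

Section M.
Variable R : realType.
Variable n : seq nat.
Variable A : seq nat -> R.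
Variable p : nat.
Variable fibs : seq (seq nat).
Hypothesis hd : (2 <= size n)%N.
Hypothesis hp : (p < size n)%N.
Hypothesis hf : fiber_enum n A p fibs.

Local Notation d := (size n).
Local Notation Rk := (size fibs).
Local Notation sb b := (nth [::] fibs b).

Lemma s_lt b k : (b < Rk)%N -> (k < d)%N -> k != p -> (nth 0 (sb b) k < nth 0 n k)%N.
Proof.
move=> hb hk hkp; have hm : sb b \in fibs by apply: mem_nth.
have [_ /(_ (sb b)) [H _]] := hf; have [[_ [_ H']] _] := H hm; exact: H'.
Qed.

Definition FI (G : core R) k := [/\ cr2 G = Rk, cn G = nth 0%N n k &
  exists c : nat -> nat, forall b, (b < Rk)%N -> (c b < cr1 G)%N /\
    forall a i, (a < cr1 G)%N -> (i < cn G)%N ->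
      cf G a i b = ((a == c b) && (i == nth 0%N (sb b) k))%:R].

Definition BI (G : core R) k := [/\ cr1 G = Rk, cn G = nth 0%N n k &
  exists c : nat -> nat, forall a, (a < Rk)%N -> (c a < cr2 G)%N /\
    forall i b, (i < cn G)%N -> (b < cr2 G)%N ->
      cf G a i b = ((b == c a) && (i == nth 0%N (sb a) k))%:R].

Definition OL (G : core R) := orthonormal_cols (Lrows G) (cr2 G) (Lunf G).
Definition OR (G : core R) := orthonormal_cols (Rtrows G) (cr1 G) (Rtunf G).

Lemma Lcols_FI G k : FI G k -> (k < d)%N -> k != p ->
  exists c, (forall b, (b < Rk)%N -> (c b * cn G + nth 0%N (sb b) k < Lrows G)%N) /\
   Lcols G = [seq uv R (Lrows G) (c b * cn G + nth 0%N (sb b) k) | b <- iota 0 Rk].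
Proof.
case=> h2 hn [c hc] hk hkp; exists c; split.
  move=> b hb; have [hcb _] := hc b hb; have := @s_lt b k hb hk hkp; rewrite -hn /Lrows; exact: lt_pos.
rewrite /Lcols h2; apply/eq_in_map => b; rewrite mem_iota add0n => /andP[_ hb].
rewrite /uv; apply/eq_in_map => r; rewrite mem_iota add0n => /andP[_ hr].
have [hcb hcf] := hc b hb.
have hs : (nth 0%N (sb b) k < cn G)%N by rewrite hn; apply: s_lt.
have hq : (0 < cn G)%N by apply: leq_ltn_trans hs.
rewrite /Lunf hcf; [by rewrite (@divmod_eq r _ (c b) _ hs) | by rewrite ltn_divLR | exact: ltn_pmod].
Qed.

Lemma Rtcols_BI G k : BI G k -> (k < d)%N -> k != p ->
  exists c, (forall a, (a < Rk)%N -> (nth 0%N (sb a) k * cr2 G + c a < Rtrows G)%N) /\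
   Rtcols G = [seq uv R (Rtrows G) (nth 0%N (sb a) k * cr2 G + c a) | a <- iota 0 Rk].
Proof.
case=> h1 hn [c hc] hk hkp; exists c; split.
  move=> a ha; have [hca _] := hc a ha; have := @s_lt a k ha hk hkp; rewrite -hn /Rtrows => h; exact: lt_pos h hca.
rewrite /Rtcols h1; apply/eq_in_map => a; rewrite mem_iota add0n => /andP[_ ha].
rewrite /uv; apply/eq_in_map => r; rewrite mem_iota add0n => /andP[_ hr].
have [hca hcf] := hc a ha.
have hq : (0 < cr2 G)%N by apply: leq_ltn_trans hca.
rewrite /Rtunf hcf; [by rewrite (@divmod_eq r _ (nth 0%N (sb a) k) _ hca) andbC | by rewrite ltn_divLR // mulnC | exact: ltn_pmod].
Qed.

Lemma fwd_ok G k : size G = d -> (k < p)%N -> FI (nth (core0 R) G k) k ->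
  let G' := fwd_step G k in
  [/\ size G' = d,
      forall j, j != k -> j != k.+1 -> nth (core0 R) G' j = nth (core0 R) G j,
      OL (nth (core0 R) G' k) &
      (k.+1 < p)%N -> nth (core0 R) G k.+1 = init_core n A p fibs k.+1 ->
        FI (nth (core0 R) G' k.+1) k.+1].
Proof.
move=> hs hk hFI.
have hkd : (k < d)%N by apply: ltn_trans hk hp.
have hkp : k != p by rewrite neq_ltn hk.
have [h2 hn _] := hFI.
have [c [hc hcols]] := Lcols_FI _ _ hFI hkd hkp.
set Gk := nth (core0 R) G k in hFI h2 hn hc hcols *.
set us := [seq c b * cn Gk + nth 0%N (sb b) k | b <- iota 0 Rk].
have hcols' : Lcols Gk = [seq uv R (Lrows Gk) u | u <- us] by rewrite hcols -map_comp.
have hall : all (fun u => u < Lrows Gk)%N us.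
  by apply/allP => u /mapP [b]; rewrite mem_iota add0n => /andP[_ hb] ->; apply: hc.
have := @depar_rec_uv R (Lrows Gk) us [::] (fun w (hw : w \in [::]) => False_ind _ (notF hw)) isT hall.
rewrite /fwd_step /depar -/Gk hcols'.
set NT := depar_rec [::] _ => /= -[H1 H2 _ H3 H4].
split.
- have h1 : (k.+2 <= d)%N by apply: leq_ltn_trans hk hp.
  by rewrite !size_set_nth hs (maxn_idPr (ltnW h1)) (maxn_idPr h1).
- by move=> j hj1 hj2; rewrite nth_set_nth /= (negbTE hj2) nth_set_nth /= (negbTE hj1).
- rewrite nth_set_nth /= ?(ltn_eqF (ltnSn k)) nth_set_nth /= ?eqxx.
  rewrite /OL /orthonormal_cols /= => j1 j2 hj1 hj2.
  under eq_bigr => r _ do rewrite /Lunf /= -!divn_eq.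
  have [u1 hu1 e1] := H1 _ (mem_nth [::] hj1).
  have [u2 hu2 e2] := H1 _ (mem_nth [::] hj2).
  have -> : (j1 == j2) = (u1 == u2).
    rewrite -(nth_uniq [::] hj1 hj2 H2) e1 e2.
    by apply/idP/idP => [/eqP/(@uv_inj R _ _ _ hu1 hu2) -> | /eqP -> ].
  by rewrite e1 e2 uv_dot.
move=> hk1 hinit.
rewrite nth_set_nth /= ?eqxx hinit.
have hk1d : (k.+1 == d.-1) = false.
  apply/negbTE; rewrite neq_ltn; apply/orP; left; apply: leq_trans hk1 _.
  by rewrite -ltnS prednK // (leq_ltn_trans (leq0n _) hp).
have hk1p : (k.+1 == p) = false by apply/negbTE; rewrite neq_ltn hk1.
split.
- by rewrite /init_core /= hk1d.
- by [].
exists (fun b => (nth (0%N,0%R) NT.2 b).1) => b hb.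
have hbu : (b < size us)%N by rewrite size_map size_iota.
have [T2 T1 _] := H4 b hbu.
split; first done.
move=> a i ha hi /=; rewrite h2 (bigD1 (Ordinal hb)) //= big1 ?addr0.
  rewrite /Tent T2 /init_core /= hk1d hk1p eqxx eq_sym.
  by case: (a == _); case: (i == _); rewrite /= ?mul1r ?mul0r.
move=> [a0 ha0] /= hne; rewrite /init_core /= hk1d.
have -> : (a0 == b) = false.
  by apply/negbTE; apply: contra hne => /eqP e; apply/eqP/val_inj.
by rewrite mulr0.
Qed.

Lemma bwd_ok G k : size G = d -> (p < k)%N -> (k < d)%N -> BI (nth (core0 R) G k) k ->
  let G' := bwd_step G k in
  [/\ size G' = d,
      forall j, j != k -> j != k.-1 -> nth (core0 R) G' j = nth (core0 R) G j,
      OR (nth (core0 R) G' k) &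
      (p < k.-1)%N -> nth (core0 R) G k.-1 = init_core n A p fibs k.-1 ->
        BI (nth (core0 R) G' k.-1) k.-1].
Proof.
move=> hs hpk hkd hBI.
have hkp : k != p by rewrite neq_ltn hpk orbT.
have hk0 : (0 < k)%N by apply: leq_ltn_trans (leq0n p) hpk.
have [h1 hn _] := hBI.
have [c [hc hcols]] := Rtcols_BI _ _ hBI hkd hkp.
set Gk := nth (core0 R) G k in hBI h1 hn hc hcols *.
set us := [seq nth 0%N (sb a) k * cr2 Gk + c a | a <- iota 0 Rk].
have hcols' : Rtcols Gk = [seq uv R (Rtrows Gk) u | u <- us] by rewrite hcols -map_comp.
have hall : all (fun u => u < Rtrows Gk)%N us.
  by apply/allP => u /mapP [a]; rewrite mem_iota add0n => /andP[_ ha] ->; apply: hc.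
have := @depar_rec_uv R (Rtrows Gk) us [::] (fun w (hw : w \in [::]) => False_ind _ (notF hw)) isT hall.
rewrite /bwd_step /depar -/Gk hcols'.
set NT := depar_rec [::] _ => /= -[H1 H2 _ H3 H4].
have hkk : (k == k.-1) = false by rewrite -{1}(prednK hk0) (gtn_eqF (ltnSn _)).
split.
- by rewrite !size_set_nth hs (maxn_idPr hkd) (prednK hk0) (maxn_idPr (ltnW hkd)).
- by move=> j hj1 hj2; rewrite nth_set_nth /= (negbTE hj2) nth_set_nth /= (negbTE hj1).
- rewrite nth_set_nth /= ?hkk nth_set_nth /= ?eqxx.
  rewrite /OR /orthonormal_cols /= => j1 j2 hj1 hj2.
  under eq_bigr => r _ do rewrite /Rtunf /= -!divn_eq.
  have [u1 hu1 e1] := H1 _ (mem_nth [::] hj1).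
  have [u2 hu2 e2] := H1 _ (mem_nth [::] hj2).
  have -> : (j1 == j2) = (u1 == u2).
    rewrite -(nth_uniq [::] hj1 hj2 H2) e1 e2.
    by apply/idP/idP => [/eqP/(@uv_inj R _ _ _ hu1 hu2) -> | /eqP -> ].
  by rewrite e1 e2 uv_dot.
move=> hk1 hinit.
rewrite nth_set_nth /= ?eqxx hinit.
have hkmd : (k.-1 == d.-1) = false.
  apply/negbTE; rewrite neq_ltn; apply/orP; left.
  by rewrite -ltnS (prednK hk0) prednK // (leq_ltn_trans (leq0n _) hp).
have hkm0 : (k.-1 == 0)%N = false by apply/negbTE; rewrite neq_ltn (leq_ltn_trans (leq0n _) hk1) orbT.
have hkmp : (k.-1 == p) = false by apply/negbTE; rewrite neq_ltn hk1 orbT.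
split.
- by rewrite /init_core /= hkm0.
- by [].
exists (fun a => (nth (0%N,0%R) NT.2 a).1) => a ha.
have hau : (a < size us)%N by rewrite size_map size_iota.
have [T2 T1 _] := H4 a hau.
split; first done.
move=> i b ha' hb /=; rewrite h1 (bigD1 (Ordinal ha)) //= big1 ?addr0.
  rewrite /Tent T2 /init_core /= hkm0 hkmd hkmp eqxx.
  by case: (eqVneq b (nth (0%N,0%R) NT.2 a).1) => _; case: (i == _); rewrite /= ?mul1r ?mul0r ?mulr1 ?mulr0.
move=> [b0 hb0] /= hne; rewrite /init_core /= hkm0 hkmd.
have -> : (a == b0) = false.
  by apply/negbTE; apply: contra hne => /eqP e; apply/eqP/val_inj.
by rewrite mul0r.
Qed.

Lemma nth_init k : (k < d)%N -> nth (core0 R) (init_tt n A p fibs) k = init_core n A p fibs k.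
Proof. by move=> hk; rewrite /init_tt (nth_map 0%N) ?size_iota // nth_iota. Qed.

Lemma FI_init0 : (0 < p)%N -> FI (init_core n A p fibs 0) 0.
Proof.
move=> hp0.
have hd0 : (0 == d.-1)%N = false by case: (size n) hd => [|[|x]].
have hp0' : (0 == p)%N = false by case: p hp0.
split.
- by rewrite /init_core /= hd0.
- by [].
exists (fun _ => 0%N) => b hb; split => // a i; rewrite /init_core /= => ha hi.
rewrite hp0'; move: ha; rewrite ltnS leqn0 => /eqP -> /=.
by case: (i == _).
Qed.

Lemma BI_initd : (p < d.-1)%N -> BI (init_core n A p fibs d.-1) d.-1.
Proof.
move=> hpd.
have hd0 : (d.-1 == 0)%N = false by case: (size n) hd => [|[|x]].
have hdp : (d.-1 == p)%N = false by apply/negbTE; rewrite neq_ltn hpd orbT.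
split.
- by rewrite /init_core /= hd0.
- by [].
exists (fun _ => 0%N) => a ha; split; first by rewrite /init_core /= eqxx.
move=> i b; rewrite /init_core /= eqxx hd0 hdp => hi.
rewrite ltnS leqn0 => /eqP -> /=.
by case: (i == _).
Qed.

Definition FW (G : seq (core R)) j := [/\ size G = d,
  forall k, (k < j)%N -> OL (nth (core0 R) G k),
  ((j < p)%N -> FI (nth (core0 R) G j) j) &
  forall k, (j < k)%N -> (k < d)%N -> nth (core0 R) G k = init_core n A p fibs k].

Lemma fw_all j : (j <= p)%N -> FW (foldl (@fwd_step R) (init_tt n A p fibs) (iota 0 j)) j.
Proof.
elim: j => [|j IH] hj.
  split => //=.
  - by rewrite size_map size_iota.
  - by move=> hp0; rewrite nth_init ?(ltn_trans hp0 hp) //; apply: FI_init0.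
  - by move=> k hk hkd; rewrite nth_init.
have -> : iota 0 j.+1 = iota 0 j ++ [:: j] by rewrite -[j.+1]addn1 iotaD.
rewrite foldl_cat /=.
have [hs hO hF hI] := IH (ltnW hj).
set G := foldl _ _ _ in hs hO hF hI *.
have hjp : (j < p)%N := hj.
have [s' e' O' F'] := fwd_ok _ _ hs hjp (hF hjp).
split => //.
- move=> k; rewrite ltnS leq_eqVlt => /orP[/eqP -> //|hk].
  have h1 : k != j by rewrite ltn_eqF.
  have h2 : k != j.+1 by rewrite ltn_eqF // (ltn_trans hk (ltnSn j)).
  by rewrite e' //; apply: hO.
- move=> hj1; exact: F' hj1 (hI _ (ltnSn j) (ltn_trans hj1 hp)).
- move=> k hk hkd.
  have h1 : k != j by rewrite gtn_eqF // (ltn_trans (ltnSn j) hk).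
  have h2 : k != j.+1 by rewrite gtn_eqF.
  by rewrite e' ?hI // (ltn_trans (ltnSn j) hk).
Qed.

Definition BW (G : seq (core R)) t := [/\ size G = d,
  forall k, (k < p)%N -> OL (nth (core0 R) G k),
  forall k, (t < k)%N -> (k < d)%N -> OR (nth (core0 R) G k),
  ((p < t)%N -> BI (nth (core0 R) G t) t) &
  forall k, (p < k)%N -> (k < t)%N -> nth (core0 R) G k = init_core n A p fibs k].

Lemma bw_all m : forall G, (p + m < d)%N -> BW G (p + m) ->
  BW (foldl (@bwd_step R) G (rev (iota p.+1 m))) p.
Proof.
elim: m => [|m IH] G hm hB; first by rewrite addn0 in hB.
have -> : iota p.+1 m.+1 = iota p.+1 m ++ [:: (p + m).+1] by rewrite -[m.+1]addn1 iotaD addSn.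
rewrite rev_cat /=.
rewrite addnS in hm hB.
have [hs hO hR hF hI] := hB.
have hpt : (p < (p + m).+1)%N by rewrite ltnS leq_addr.
have [s' e' O' F'] := bwd_ok _ _ hs hpt hm (hF hpt).
apply: IH; first by apply: ltn_trans (ltnSn _) hm.
split => //.
- move=> k hk.
  have h1 : k != (p + m).+1 by rewrite ltn_eqF // (ltn_trans hk hpt).
  have h2 : k != (p + m).+1.-1 by rewrite ltn_eqF // (leq_trans hk (leq_addr _ _)).
  by rewrite e' //; apply: hO.
- move=> k hk hkd; move: hk; rewrite leq_eqVlt => /orP[/eqP <- //|hk].
  have h1 : k != (p + m).+1 by rewrite gtn_eqF.
  have h2 : k != (p + m).+1.-1 by rewrite gtn_eqF // (ltn_trans (ltnSn _) hk).
  by rewrite e' //; apply: hR.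
- move=> hpm; exact: F' hpm (hI _ hpm (ltnSn _)).
- move=> k hpk hk.
  have h1 : k != (p + m).+1 by rewrite ltn_eqF // (ltn_trans hk (ltnSn _)).
  have h2 : k != (p + m).+1.-1 by rewrite ltn_eqF.
  by rewrite e' ?hI // (ltn_trans hk (ltnSn _)).
Qed.

Lemma main_res :
  let G := sparse_tt n A p fibs in
  (forall k, (k < p)%N ->
     let Gk := nth (core0 R) G k in
     orthonormal_cols (Lrows Gk) (cr2 Gk) (Lunf Gk)) /\
  (forall k, (p < k)%N -> (k < size n)%N ->
     let Gk := nth (core0 R) G k in
     orthonormal_cols (Rtrows Gk) (cr1 Gk) (Rtunf Gk)).
Proof.
have [hs hO hF hI] := fw_all p (leqnn p).
set G1 := foldl _ _ _ in hs hO hF hI.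
have hpd : (p <= d.-1)%N by rewrite -ltnS prednK // (leq_ltn_trans (leq0n _) hp).
have hd1 : (d.-1 < d)%N by rewrite prednK // (leq_ltn_trans (leq0n _) hp).
have hB0 : BW G1 (p + (d.-1 - p)).
  rewrite subnKC //; split => //.
  - by move=> k hk hkd; move: (leq_ltn_trans hk hkd); rewrite prednK ?ltnn // (leq_ltn_trans (leq0n _) hp).
  - by move=> hpd'; rewrite hI //; apply: BI_initd.
  - by move=> k hpk hk; rewrite hI // (ltn_trans hk hd1).
have hm : (p + (d.-1 - p) < d)%N by rewrite subnKC.
have [_ hO' hR' _ _] := bw_all (d.-1 - p) G1 hm hB0.
by split => //.
Qed.
End M.

Theorem corollary2 (R : realType) (n : seq nat) (A : seq nat -> R) (p : nat)
    (fibs : seq (seq nat)) :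
  (2 <= size n)%N -> (p < size n)%N -> fiber_enum n A p fibs ->
  let G := sparse_tt n A p fibs in
  (forall k, (k < p)%N ->
     let Gk := nth (core0 R) G k in
     orthonormal_cols (Lrows Gk) (cr2 Gk) (Lunf Gk)) /\
  (forall k, (p < k)%N -> (k < size n)%N ->
     let Gk := nth (core0 R) G k in
     orthonormal_cols (Rtrows Gk) (cr1 Gk) (Rtunf Gk)).
Proof. move=> hd hp hf; exact: main_res. Qed.
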